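(* In the one-shot linear delivery model described in the context, consider a single communication block in which a set $\{\mathbf{w}_{n_l,f_l}\}_{l=1}^L$ of $L$ packets is scheduled to be transmitted together to $L$ distinct receivers (packet $l$ intended for the $l$-th of these receivers). In order for each receiver to successfully decode its desired packet, necessarily $$L\le\min_{l\in[L]}\big(|\mathcal{T}_l|+|\mathcal{R}_l|\big),$$ where $\mathcal{T}_l$ and $\mathcal{R}_l$ denote the sets of transmitters and of receivers, respectively, that have cached the packet $\mathbf{w}_{n_l,f_l}$.
   Context: Network: transmitters $\text{Tx}_1,\dots,\text{Tx}_{K_T}$, receivers $\text{Rx}_1,\dots,\text{Rx}_{K_R}$, channel $Y_j=\sum_i h_{ji}X_i+Z_j$ with fixed complex gains $h_{ji}$ and Gaussian noise. Each transmitter and receiver has cached a set of whole packets of a file library. Each packet $\mathbf{w}_{n,f}$ is encoded into a coded packet $\tilde{\mathbf{w}}_{n,f}\in\mathbb{C}^{\tilde B}$ carrying one degree of freedom. In a block where a set $\mathcal{D}$ of packets is scheduled, transmitter $\text{Tx}_i$ sends $\mathbf{x}_i=\sum_{\mathbf{w}_{n,f}\in\mathcal{D}\text{ cached at }\text{Tx}_i} v_{i,n,f}\tilde{\mathbf{w}}_{n,f}$ with complex coefficients $v_{i,n,f}$; a scheduled receiver $\text{Rx}_j$ receives $\mathbf{y}_j=\sum_i h_{ji}\mathbf{x}_i+\mathbf{z}_j$ and forms a linear combination of $\mathbf{y}_j$ and the coded packets it has cached. Decoding is successful if this linear combination equals its desired coded packet plus $\mathbf{z}_j$ (all interference removed)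.
   Formalization: The channel gains $h_{ji}$ are generic, every square submatrix of the receiver-by-transmitter gain matrix being nonsingular, and the l-th receiver has not itself cached its desired packet $\mathbf{w}_{n_l,f_l}$. Each condition added here is assumed in the paper as well or is needed for the statement above to hold. *)

(* Defs.v *)
From HB Require Import structures.
From mathcomp Require Import all_boot all_order all_algebra.
From mathcomp Require Import complex.
Set Implicit Arguments. Unset Strict Implicit. Unset Printing Implicit Defensive.
Import Order.TTheory GRing.Theory Num.Theory.
Local Open Scope ring_scope.

(* Genericity of the channel matrix h (rows: receivers, columns: transmitters):
   every square submatrix is nonsingular. *)
Definition generic_channel (C : fieldType) (KR KT : nat) (h : 'M[C]_(KR, KT)) :=
  forall (k : nat) (r : 'I_k -> 'I_KR) (t : 'I_k -> 'I_KT),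
    injective r -> injective t ->
    \det (\matrix_(a < k, b < k) h (r a) (t b)) != 0.

(* Coefficient of the coded packet p in the signal x_i of transmitter i, when the
   scheduled packets are pk 0, ..., pk (L-1) and v are the precoding coefficients:
   x_i = sum_{scheduled p cached at Tx_i} v i p * w~_p. *)
Definition tx_coef (C : fieldType) (KT : nat) (P : finType)
    (cacheT : 'I_KT -> {set P}) (L : nat) (pk : 'I_L -> P)
    (v : 'I_KT -> P -> C) (i : 'I_KT) (p : P) : C :=
  if (p \in cacheT i) && (p \in [set pk l | l : 'I_L]) then v i p else 0.

(* Coefficient of w~_p in y_j = sum_i h_{ji} x_i + z_j. *)
Definition rx_coef (C : fieldType) (KR KT : nat) (P : finType)
    (h : 'M[C]_(KR, KT)) (cacheT : 'I_KT -> {set P}) (L : nat) (pk : 'I_L -> P)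
    (v : 'I_KT -> P -> C) (j : 'I_KR) (p : P) : C :=
  \sum_(i < KT) h j i * tx_coef cacheT pk v i p.

(* Rx_j successfully decodes packet q: there is a linear combination
   u * y_j + sum_{p cached at Rx_j} c p * w~_p that equals w~_q + z_j,
   i.e. the noise coefficient u is 1 and the coefficient of each coded packet p
   is 1 if p = q and 0 otherwise (coded packets are independent symbols). *)
Definition decodes (C : fieldType) (KR KT : nat) (P : finType)
    (h : 'M[C]_(KR, KT)) (cacheT : 'I_KT -> {set P}) (cacheR : 'I_KR -> {set P})
    (L : nat) (pk : 'I_L -> P) (v : 'I_KT -> P -> C) (j : 'I_KR) (q : P) : Prop :=
  exists (u : C) (c : P -> C),
    u = 1 /\
    forall p : P,
      u * rx_coef h cacheT pk v j p + (if p \in cacheR j then c p else 0)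
      = (p == q)%:R.

(* Main.v *)
Require Import Defs.
From HB Require Import structures.
From mathcomp Require Import all_boot all_order all_algebra.
From mathcomp Require Import complex.
From mathcomp Require Import zify.
Import Order.TTheory GRing.Theory Num.Theory.
Local Open Scope ring_scope.
Local Open Scope complex_scope.

Theorem lemma3 (R : rcfType) (KT KR : nat) (P : finType)
    (h : 'M[R[i]]_(KR, KT))
    (cacheT : 'I_KT -> {set P}) (cacheR : 'I_KR -> {set P})
    (L : nat) (pk : 'I_L -> P) (rx : 'I_L -> 'I_KR) :
  generic_channel h ->
  injective pk ->
  injective rx ->
  (forall l : 'I_L, pk l \notin cacheR (rx l)) ->
  (exists v : 'I_KT -> P -> R[i],
      forall l : 'I_L, decodes h cacheT cacheR pk v (rx l) (pk l)) ->
  forall l : 'I_L,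
    (L <= #|[set i : 'I_KT | pk l \in cacheT i]|
          + #|[set j : 'I_KR | pk l \in cacheR j]|)%N.
Proof.
move=> hgen pkinj rxinj nocache [v hdec] l.
set q := pk l.
set T := [set i : 'I_KT | q \in cacheT i].
set RR := [set j : 'I_KR | q \in cacheR j].
set S := [set l' : 'I_L | q \notin cacheR (rx l')].
have rxE : forall j, rx_coef h cacheT pk v j q =
    \sum_(b < #|T|) h j (enum_val b) * v (enum_val b) q.
  move=> j; rewrite /rx_coef (bigID (fun i => i \in T)) /=.
  rewrite [X in _ + X]big1 ?addr0; last first.
    by move=> i; rewrite inE /tx_coef => /negbTE ->; rewrite mulr0.
  rewrite (big_enum_val (A := mem T)) /=; apply: eq_bigr => b _.
  have := enum_valP b; rewrite inE /tx_coef => ->.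
  by rewrite imset_f.
have coef_l : rx_coef h cacheT pk v (rx l) q = 1.
  have [u [c [-> hc]]] := hdec l; have := hc q.
  by rewrite (negbTE (nocache l)) addr0 mul1r eqxx.
have coef_o : forall l', l' \in S -> l' != l -> rx_coef h cacheT pk v (rx l') q = 0.
  move=> l'; rewrite inE => hS hne.
  have [u [c [-> hc]]] := hdec l'; have := hc q.
  rewrite (negbTE hS) addr0 mul1r => ->.
  case: eqP => // /pkinj E; by rewrite E eqxx in hne.
have cardS : (L - #|RR| <= #|S|)%N.
  have : (#|~: S| <= #|RR|)%N.
    rewrite -(card_imset _ rxinj); apply: subset_leq_card.
    apply/subsetP => j /imsetP [l' ]; rewrite !inE negbK => H ->; by [].
  have := cardsC S; rewrite card_ord; move=> E F; rewrite leq_subLR -{1}E addnC leq_add2r; exact: F.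
rewrite leqNgt; apply/negP => Hlt.
set J := rx @: (S :\ l).
have lS : l \in S by rewrite inE nocache.
have HJ : (#|T| <= #|J|)%N.
  rewrite card_imset // (cardsD1 l S) lS /= in cardS *.
  move: Hlt cardS; move: #|T| #|RR| #|S :\ l| => a b c. lia.
pose r := fun a : 'I_#|T| => @enum_val _ (mem J) (widen_ord HJ a).
pose t := fun b : 'I_#|T| => @enum_val _ (mem T) b.
have rinj : injective r.
  by move=> a a' /enum_val_inj /(congr1 val) /= E; apply: val_inj.
have tinj : injective t by exact: enum_val_inj.
pose M := \matrix_(a < #|T|, b < #|T|) h (r a) (t b).
pose x := \col_(b < #|T|) v (t b) q.
have Mx : M *m x = 0.
  apply/matrixP => a z; rewrite !mxE.
  have Ha : r a \in J := enum_valP _.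
  move: Ha => /imsetP [l' ].
  rewrite !inE => /andP [hne hS] E.
  apply: (etrans _ (coef_o l' _ _)); rewrite ?inE // rxE -E; apply: eq_bigr => b _.
  by rewrite !mxE.
have Mu : M \in unitmx by rewrite unitmxE unitfE; exact: hgen.
have x0 : x = 0 by rewrite -(mulKmx Mu x) Mx mulmx0.
have := coef_l; rewrite rxE big1 => [/eqP|b _]; first by rewrite eq_sym oner_eq0.
have := congr1 (fun m : 'cV[R[i]]_#|T| => m b ord0) x0; rewrite /= mxE => ->.
by rewrite mxE mulr0.
Qed.
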